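(* Let $d\leq n$ be natural numbers. Suppose $A\subseteq 2^{[n]}$ satisfies $\mathsf{VC\text{-}dim}(\{S\triangle T \mid S,T\in A\})\leq d$. Then \[ |A| \leq 2\binom{n}{\leq \lfloor d/2\rfloor}. \]
   Context: $[n]=\{1,\dots,n\}$ and $2^{[n]}$ is the family of all subsets of $[n]$; $\triangle$ denotes symmetric difference. For a family $B\subseteq 2^{[n]}$, $\mathsf{VC\text{-}dim}(B)$ is the size of the largest $Y\subseteq[n]$ such that $\{S\cap Y \mid S\in B\}=2^{Y}$. The notation $\binom{n}{\leq k}$ means $\sum_{i=0}^{k}\binom{n}{i}$. *)

(* Defs.v *)
From mathcomp Require Import all_boot.
Set Implicit Arguments. Unset Strict Implicit. Unset Printing Implicit Defensive.

(* Ground set [n] is represented by 'I_n; subsets of [n] are {set 'I_n}. *)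
Definition symdiff (T : finType) (S U : {set T}) : {set T} := (S :\: U) :|: (U :\: S).

Definition symdiff_family (T : finType) (A : {set {set T}}) : {set {set T}} :=
  [set symdiff S U | S in A, U in A].

Definition shatters (T : finType) (B : {set {set T}}) (Y : {set T}) : bool :=
  [set S :&: Y | S in B] == powerset Y.

Definition vc_dim_le (T : finType) (B : {set {set T}}) (d : nat) : bool :=
  [forall Y : {set T}, shatters B Y ==> (#|Y| <= d)].

Definition binom_le (n k : nat) : nat := \sum_(0 <= i < k.+1) 'C(n, i).

(* Main.v *)
Require Import Defs.
From mathcomp Require Import all_boot all_algebra zify.
Import GRing.Theory.
Set Implicit Arguments. Unset Strict Implicit. Unset Printing Implicit Defensive.
Local Open Scope ring_scope.

Section Sets.
Variable n : nat.
Implicit Types (X Y Z S T U : {set 'I_n}) (B : {set {set 'I_n}}).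

Lemma shattersP B Y :
  reflect (forall Z, Z \subset Y -> exists2 S, S \in B & S :&: Y = Z) (shatters B Y).
Proof.
rewrite /shatters eqEsubset.
have -> : [set S :&: Y | S in B] \subset powerset Y.
  by apply/subsetP => _ /imsetP[S _ ->]; rewrite powersetE subsetIr.
apply: (iffP subsetP) => H Z.
- move=> sZ; have := H Z; rewrite powersetE => /(_ sZ) /imsetP[S SB ->].
  by exists S.
- by rewrite powersetE => /H[S SB <-]; apply: imset_f.
Qed.

Lemma shatters_top B Y : shatters B Y -> exists2 S, S \in B & Y \subset S.
Proof.
by move/shattersP/(_ Y (subxx _)) => [S SB E]; exists S => //; rewrite -E subsetIl.
Qed.

Lemma shatters1 (i : 'I_n) B Y :
  shatters [set X :\ i | X in B] Y -> (i \notin Y) /\ shatters B Y.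
Proof.
move=> sh; have iY : i \notin Y.
  have [S /imsetP[X _ ->] YS] := shatters_top sh.
  by apply/negP => /(subsetP YS); rewrite setD11.
split=> //; apply/shattersP => Z sZ.
have [S /imsetP[X XB ->] E] := shattersP _ _ sh Z sZ.
exists X => //; rewrite -E; apply/setP => x; rewrite !inE.
by case: (x =P i) => [->|]; [rewrite (negbTE iY) !andbF|].
Qed.

Lemma shatters2 (i : 'I_n) B Y :
  shatters [set Z in B | (i \notin Z) && (i |: Z \in B)] Y ->
  (i \notin Y) /\ shatters B (i |: Y).
Proof.
move=> sh; have iY : i \notin Y.
  have [S] := shatters_top sh; rewrite inE => /and3P[_ iS _] YS.
  by apply/negP => /(subsetP YS); apply/negP.
split=> //; apply/shattersP => Z sZ.
have sZ' : Z :\ i \subset Y.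
  by apply/subsetP=> x; rewrite !inE => /andP[xi /(subsetP sZ)]; rewrite !inE (negbTE xi).
have [S] := shattersP _ _ sh _ sZ'; rewrite inE => /and3P[SB iS iSB] E.
case iZ: (i \in Z).
- exists (i |: S) => //; apply/setP=> x.
  move/setP: E => /(_ x); rewrite !inE.
  case: (x =P i) => [->|] //= _; by rewrite iZ.
- exists S => //; apply/setP=> x.
  move/setP: E => /(_ x); rewrite !inE.
  case: (x =P i) => [->|] //= _; by rewrite iZ (negbTE iS).
Qed.

End Sets.

Section Span.
Variable n : nat.
Local Notation F := 'F_2.
Implicit Types (X Y Z S T U W : {set 'I_n}) (B : {set {set 'I_n}}).

Lemma D1U_eq (i : 'I_n) Z : ((i |: Z) :\ i == Z) = (i \notin Z).
Proof.
apply/eqP/idP => [<-|iZ]; first by rewrite setD11.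
exact: setU1K.
Qed.

Lemma shift_sum (i : 'I_n) (cq : {set 'I_n} -> F) (h : {set 'I_n} -> F) :
  (forall Z, cq Z != 0 -> i \notin Z) ->
  \sum_(Y : {set 'I_n}) (if i \in Y then cq (Y :\ i) else 0) * h Y = \sum_(Z : {set 'I_n}) cq Z * h (i |: Z).
Proof.
move=> hc.
have -> : \sum_(Z : {set 'I_n}) cq Z * h (i |: Z) = \sum_(Z : {set 'I_n} | i \notin Z) cq Z * h (i |: Z).
  rewrite [RHS]big_mkcond; apply: eq_bigr => Z _.
  case: ifP => // /negbFE iZ.
  by case: (eqVneq (cq Z) 0) => [->|/hc]; [rewrite mul0r|rewrite iZ].
have -> : \sum_(Y : {set 'I_n}) (if i \in Y then cq (Y :\ i) else 0) * h Y =
          \sum_(Y : {set 'I_n} | i \in Y) cq (Y :\ i) * h Y.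
  by rewrite [RHS]big_mkcond; apply: eq_bigr => Y _; case: ifP; rewrite ?mul0r.
rewrite (reindex_onto (fun Z => i |: Z) (fun Y => Y :\ i)); last exact: setD1K.
apply: eq_big => [Z|Z /andP[_]]; first by rewrite setU11 D1U_eq.
by rewrite D1U_eq => iZ; rewrite setU1K.
Qed.



Lemma span_lemma m : forall W B, #|W| = m -> (forall X, X \in B -> X \subset W) ->
  forall f : {set 'I_n} -> F, exists c : {set 'I_n} -> F,
   (forall Y, c Y != 0 -> shatters B Y) /\
   (forall X, X \in B -> f X = \sum_(Y : {set 'I_n}) c Y * (Y \subset X)%:R).
Proof.
elim: m => [|m IH] W B cW sB f.
- have W0 := cards0_eq cW; subst W.
  have B0 X : X \in B -> X = set0 by move/sB; rewrite subset0 => /eqP.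
  exists (fun Y => if (Y == set0) && (set0 \in B) then f set0 else 0); split.
  + move=> Y; case: ifP => [/andP[/eqP -> s0B] _|]; last by rewrite eqxx.
    apply/shattersP => Z; rewrite subset0 => /eqP ->; exists set0 => //.
    by rewrite set0I.
  + move=> X XB; have X0 := B0 X XB; subst X.
    rewrite (bigD1 set0) //= eqxx XB sub0set mulr1 big1 ?addr0 //.
    by move=> Y /negbTE ->; rewrite mul0r.
- have : W != set0 by apply/negP => /eqP W0; rewrite W0 cards0 in cW.
  case/set0Pn => i iW.
  have cW' : #|W :\ i| = m by move: cW; rewrite (cardsD1 i) iW add1n => -[].
  pose B1 := [set X :\ i | X in B].
  pose B2 := [set Z in B | (i \notin Z) && (i |: Z \in B)].
  have sB2 X : X \in B2 -> X \subset W :\ i.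
    by rewrite inE subsetD1 => /and3P[/sB -> /= ? _].
  have sB1 X : X \in B1 -> X \subset W :\ i.
    by case/imsetP => X0 /sB X0W ->; apply: setSD.
  have [cq [hcq Hq]] := IH _ B2 cW' sB2 (fun Z => f (i |: Z) - f Z).
  pose q Z := \sum_(Y : {set 'I_n}) cq Y * (Y \subset Z)%:R.
  have [cp [hcp Hp]] := IH _ B1 cW' sB1
     (fun Z => if Z \in B then f Z else f (i |: Z) - q Z).
  have cqi Z : cq Z != 0 -> i \notin Z by move/hcq/shatters2 => [].
  have cpi Z : cp Z != 0 -> i \notin Z by move/hcp/shatters1 => [].
  exists (fun Y => cp Y + (if i \in Y then cq (Y :\ i) else 0)); split.
  + move=> Y; case: (eqVneq (cp Y) 0) => [->|/hcp/shatters1 [] //].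
    rewrite add0r; case: ifP => [iY|]; last by rewrite eqxx.
    by move/hcq/shatters2 => [_]; rewrite setD1K.
  + move=> X XB.
    under eq_bigr do rewrite mulrDl.
    rewrite big_split /= shift_sum //=.
    have X1 : X :\ i \in B1 by apply: imset_f.
    have Ep : \sum_(Y : {set 'I_n}) cp Y * (Y \subset X)%:R =
              \sum_(Y : {set 'I_n}) cp Y * (Y \subset X :\ i)%:R.
      apply: eq_bigr => Y _; case: (eqVneq (cp Y) 0) => [->|/cpi iY].
        by rewrite !mul0r.
      by rewrite subsetD1 iY andbT.
    case iX: (i \in X).
    * have Eq : \sum_(Y : {set 'I_n}) cq Y * (i |: Y \subset X)%:R = q (X :\ i).
        apply: eq_bigr => Y _; case: (eqVneq (cq Y) 0) => [->|/cqi iY].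
          by rewrite !mul0r.
        by rewrite subsetD1 iY andbT subUset sub1set iX.
      rewrite Ep Eq -Hp //.
      case: ifP => [XiB|]; last by rewrite setD1K // subrK.
      have XiB2 : X :\ i \in B2 by rewrite inE XiB setD11 setD1K.
      by rewrite /q -Hq // setD1K // addrC subrK.
    * have XX : X :\ i = X.
        by apply/setP => x; rewrite !inE; case: (x =P i) => // ->; rewrite iX.
      rewrite [R in _ = _ + R]big1 ?addr0; last first.
        by move=> Y _; rewrite subUset sub1set iX /= mulr0.
      by rewrite Ep -Hp // XX XB.
Qed.

End Span.

Section Combi.
Variable n : nat.
Local Notation F := 'F_2.
Implicit Types (X Y Z S T U V : {set 'I_n}).

Lemma symdiffK Y U : symdiff Y (symdiff Y U) = U.
Proof.
apply/setP=> x; rewrite /symdiff !inE.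
by case: (x \in Y); case: (x \in U).
Qed.

Lemma symdiff_inj Y : injective (symdiff Y).
Proof. exact: can_inj (symdiffK Y). Qed.

Lemma symdiff_eq0 S T : (symdiff S T == set0) = (S == T).
Proof. by rewrite /symdiff setU_eq0 !setD_eq0 eqEsubset. Qed.

Lemma symdiff_sub Y U : U \subset Y -> symdiff Y U = Y :\: U.
Proof.
move=> /subsetP sUY; apply/setP=> x; rewrite /symdiff !inE.
case xU: (x \in U); case xY: (x \in Y) => //=.
by have := sUY x xU; rewrite xY.
Qed.

Lemma symdiff_subset Y U : (symdiff Y U \subset Y) = (U \subset Y).
Proof.
apply/idP/idP => H; apply/subsetP => x.
- move=> xU; case xY: (x \in Y) => //.
  have : x \in symdiff Y U by rewrite /symdiff !inE xY xU.
  by move/(subsetP H); rewrite xY.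
- rewrite /symdiff !inE => /orP[/andP[_ ->] //|/andP[xY xU]].
  by rewrite (subsetP H x xU) in xY.
Qed.

Lemma setDD Y U : U \subset Y -> Y :\: (Y :\: U) = U.
Proof. by move=> sUY; rewrite setDDr setDv set0U; apply/setIidPr. Qed.

Lemma boolRM (a b : bool) : (a%:R * b%:R : F) = (a && b)%:R.
Proof. by case: a; case: b; rewrite ?mul1r ?mul0r. Qed.

Lemma prod_bool (P : pred 'I_n) : \prod_i ((P i)%:R : F) = ([forall i, P i])%:R.
Proof.
case: (boolP [forall i, P i]) => [/forallP H | /forallPn [i Pi]].
- by rewrite big1 // => i _; rewrite H.
- by rewrite (bigD1 i) //= (negbTE Pi) mul0r.
Qed.

Lemma parity_id Y S T :
  \sum_(U : {set 'I_n}) (((U \subset Y) && (U \subset S) && (Y :\: U \subset T))%:R : F)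
  = (Y \subset symdiff S T)%:R.
Proof.
have H1 U : (U \subset Y) && (U \subset S) && (Y :\: U \subset T) =
   [forall i, if i \in U then (i \in Y) && (i \in S) else (i \in Y) ==> (i \in T)].
  rewrite -andbA; apply/idP/forallP => [/and3P[/subsetP UY /subsetP US /subsetP YT] i | H].
  - case: ifP => iU; first by rewrite UY ?US.
    by apply/implyP => iY; apply: YT; rewrite inE iU iY.
  - apply/and3P; split; apply/subsetP => i; move: (H i).
    + by move=> + iU; rewrite iU => /andP[].
    + by move=> + iU; rewrite iU => /andP[].
    + by rewrite inE => + /andP[iU iY]; rewrite (negbTE iU) iY.
have H2 : (Y \subset symdiff S T) = [forall i, (i \in Y) ==> (i \in symdiff S T)].
  by apply/subsetP/forallP => H i; [apply/implyP; exact: H | exact/implyP].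
rewrite H2 -prod_bool.
rewrite (eq_bigr (fun i => (((i \in Y) && (i \in S))%:R : F) + (((i \in Y) ==> (i \in T))%:R))); last first.
  move=> i _; rewrite /symdiff !inE.
  by case: (i \in Y); case: (i \in S); case: (i \in T); apply/eqP.
rewrite bigA_distr; apply: eq_bigr => U _.
rewrite H1 -prod_bool; apply: eq_bigr => i _.
by case: ifP.
Qed.

Lemma split_lemma k Y S T : (#|Y| <= k + k + 1)%N ->
  \sum_(U in [set U : {set 'I_n} | (#|U| <= k)%N])
      (((U \subset S) && ((U \subset Y) && (Y :\: U \subset T)))%:R : F)
  + \sum_(V in [set V : {set 'I_n} | (#|V| <= k)%N])
      ((V \subset Y) && (k < #|Y :\: V|)%N && (Y :\: V \subset S) && (V \subset T))%:R
  = \sum_(U : {set 'I_n}) ((U \subset Y) && (U \subset S) && (Y :\: U \subset T))%:R.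
Proof.
move=> hY.
rewrite big_mkcond [X in _ + X]big_mkcond [X in _ + X](reindex_inj (symdiff_inj (Y:=Y))).
rewrite -big_split; apply: eq_bigr => U _ /=; rewrite !inE.
case sUY: (U \subset Y); last first.
  rewrite symdiff_subset sUY /= andbF.
  by case: ifP; case: ifP; rewrite ?addr0.
rewrite symdiff_sub // setDD //.
have cD : #|Y :\: U| = (#|Y| - #|U|)%N.
  by rewrite cardsD; move/setIidPr: sUY => ->.
case: (leqP #|U| k) => hU.
- by rewrite !andbF /=; case: ifP; rewrite ?mulr0n ?addr0.
- have -> : (#|Y :\: U| <= k)%N.
    rewrite cD; move: hU hY; set a := #|U|; set b := #|Y|; move=> hU hY; lia.
  by rewrite add0r subsetDl /=.
Qed.

End Combi.

Lemma card_D n k : #|[set U : {set 'I_n} | (#|U| <= k)%N]| = binom_le n k.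
Proof.
elim: k => [|k IH].
- rewrite /binom_le big_nat1 bin0.
  have -> : [set U : {set 'I_n} | (#|U| <= 0)%N] = [set set0].
    by apply/setP => U; rewrite !inE leqn0 cards_eq0.
  by rewrite cards1.
- rewrite /binom_le big_nat_recr //= -/(binom_le n k) -IH.
  rewrite -[n in 'C(n, _)]card_ord -card_draws.
  rewrite -(cardsID [set U : {set 'I_n} | (#|U| <= k)%N] [set U : {set 'I_n} | (#|U| <= k.+1)%N]).
  congr addn; apply: eq_card => U; rewrite !inE.
  + by rewrite andb_idl //; apply: leqW.
  + by rewrite -ltnNge eqn_leq andbC.
Qed.

Section Main.
Local Notation F := 'F_2.

Lemma main_aux (n d : nat) (A : {set {set 'I_n}}) :
  vc_dim_le (symdiff_family A) d -> (#|A| <= 2 * binom_le n d./2)%N.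
Proof.
move=> vc.
set k := d./2.
have dk : (d <= k + k + 1)%N.
  rewrite /k; have := odd_double_half d; rewrite -addnn.
  by case: (odd d) => /= E; lia.
pose B := symdiff_family A.
have [c [hc Hc]] := @span_lemma n #|[set: 'I_n]| [set: 'I_n] B erefl
   (fun X _ => subsetT X) (fun X => ((X == set0)%:R : F)).
have hcd Y : c Y != 0 -> (#|Y| <= d)%N.
  by move/hc => sh; move/forallP: vc => /(_ Y) /implyP; apply.
have Key S T : S \in A -> T \in A -> ((S == T)%:R : F) =
   \sum_(Y : {set 'I_n}) c Y * \sum_(U : {set 'I_n})
      ((U \subset Y) && (U \subset S) && (Y :\: U \subset T))%:R.
  move=> SA TA; rewrite -symdiff_eq0 Hc; last by apply: imset2_f.
  by apply: eq_bigr => Y _; rewrite parity_id.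
pose D := [set U : {set 'I_n} | (#|U| <= k)%N].
pose ea (s : 'I_#|A|) : {set 'I_n} := enum_val s.
pose ed (u : 'I_#|D|) : {set 'I_n} := enum_val u.
pose P1 : 'M[F]_(#|A|, #|D|) := \matrix_(s, u) ((ed u \subset ea s)%:R).
pose Q1 : 'M[F]_(#|D|, #|A|) := \matrix_(u, t) \sum_(Y : {set 'I_n})
    c Y * ((ed u \subset Y) && (Y :\: ed u \subset ea t))%:R.
pose P2 : 'M[F]_(#|A|, #|D|) := \matrix_(s, v) \sum_(Y : {set 'I_n})
    c Y * ((ed v \subset Y) && (k < #|Y :\: ed v|)%N && (Y :\: ed v \subset ea s))%:R.
pose Q2 : 'M[F]_(#|D|, #|A|) := \matrix_(v, t) ((ed v \subset ea t)%:R).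
have E : row_mx P1 P2 *m col_mx Q1 Q2 = 1%:M.
  rewrite mul_row_col; apply/matrixP => s t; rewrite !mxE.
  under eq_bigr do rewrite !mxE.
  under [X in _ + X = _]eq_bigr do rewrite !mxE.
  set S := ea s; set T := ea t.
  have -> : (s == t) = (S == T) by rewrite (inj_eq enum_val_inj).
  rewrite Key ?enum_valP //.
  pose G1 (U : {set 'I_n}) := (U \subset S)%:R * \sum_(Y : {set 'I_n})
      c Y * ((U \subset Y) && (Y :\: U \subset T))%:R.
  pose G2 (V : {set 'I_n}) := (\sum_(Y : {set 'I_n})
      c Y * ((V \subset Y) && (k < #|Y :\: V|)%N && (Y :\: V \subset S))%:R) * (V \subset T)%:R.
  have e1 (G : {set 'I_n} -> F) : \sum_(u < #|D|) G (ed u) = \sum_(U in D) G U.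
    by rewrite [RHS]big_enum_val.
  rewrite (e1 G1) (e1 G2).
  rewrite /G1 /G2.
  under eq_bigr do rewrite mulr_sumr.
  under [X in _ + X = _]eq_bigr do rewrite mulr_suml.
  rewrite exchange_big [X in _ + X = _]exchange_big -big_split /=.
  apply: eq_bigr => Y _.
  case: (eqVneq (c Y) 0) => [->|/hcd hY].
    by rewrite mul0r big1 ?add0r ?big1 // => U _; rewrite ?mul0r ?mulr0 ?mul0r.
  rewrite -(split_lemma S T (leq_trans hY dk)) mulrDr !mulr_sumr.
  congr (_ + _); apply: eq_bigr => U _.
  - by rewrite mulrCA boolRM.
  - by rewrite -mulrA boolRM.
have : (#|A| <= #|D| + #|D|)%N.
  rewrite -{1}(mxrank1 F #|A|) -E.
  exact: leq_trans (mxrankM_maxl _ _) (rank_leq_col _).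
by rewrite card_D addnn -mul2n.
Qed.

End Main.

Close Scope ring_scope.
Unset Implicit Arguments.

Theorem theorem1p2 (n d : nat) (A : {set {set 'I_n}}) :
  d <= n ->
  vc_dim_le (symdiff_family A) d ->
  #|A| <= 2 * binom_le n d./2.
Proof. by move=> _; apply: main_aux. Qed.
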